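(* For every $w\in W$, the Chari operator $T_w$ maps the subring $\mathbb{Z}[W_{i,a}^{\pm1}]_{i\in I,a\in\mathbb{C}^\times}\subset\mathcal{Y}$ into itself.
   Context: Let $\mathfrak{g}$ be a finite-dimensional simple complex Lie algebra with Dynkin index set $I=\{1,\dots,n\}$ and Cartan matrix $C=(C_{i,j})_{i,j\in I}$. Let $d_i$ ($i\in I$) be the relatively prime positive integers such that $(d_iC_{i,j})$ is symmetric, and let $d=\max_i d_i$ be the lacing number. Let $W$ be the Weyl group, generated by simple reflections $s_i$. Fix $q\in\mathbb{C}^\times$ not a root of unity and set $q_i=q^{d_i}$. Let $\mathcal{Y}=\mathbb{Z}[Y_{i,a}^{\pm1}]_{i\in I,a\in\mathbb{C}^\times}$ and $$A_{i,a}=Y_{i,aq_i^{-1}}Y_{i,aq_i}\Big(\prod_{j:C_{j,i}=-1}Y_{j,a}\prod_{j:C_{j,i}=-2}Y_{j,aq^{-1}}Y_{j,aq}\prod_{j:C_{j,i}=-3}Y_{j,aq^{-2}}Y_{j,a}Y_{j,aq^2}\Big)^{-1}.$$ The Chari operators are the ring automorphisms $T_i$ ($i\in I$) of $\mathcal{Y}$ with $T_i(Y_{i,a})=Y_{i,a}A_{i,aq_i}^{-1}$ and $T_i(Y_{j,a})=Y_{j,a}$ for $j\neq i$; they satisfy the braid relations of $\mathfrak{g}$, and for $w\in W$ with reduced decomposition $w=s_{i_1}\cdots s_{i_k}$ one sets $T_w=T_{i_1}\cdots T_{i_k}$ (independent of the reduced decomposition). For $i\in I$, $a\in\mathbb{C}^\times$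 set $W_{i,a}=Y_{i,a}$ if $d_i=d$, $W_{i,a}=Y_{i,aq^{-1}}Y_{i,aq}$ if $d_i=d-1$, and $W_{i,a}=Y_{i,aq^{-2}}Y_{i,a}Y_{i,aq^2}$ if $d_i=d-2$. *)

(* Defs.v *)
From HB Require Import structures.
From mathcomp Require Import all_boot all_order all_algebra.
From mathcomp Require Import reals complex.
Set Implicit Arguments. Unset Strict Implicit. Unset Printing Implicit Defensive.
Import Order.TTheory GRing.Theory Num.Theory.
Local Open Scope ring_scope.

(* C i j = <alpha_i^vee, alpha_j>; d : symmetrizing integers.          *)
Record finite_cartan (n : nat) (C : 'M[int]_n) (d : 'I_n -> nat) : Prop := {
  fc_n_pos : (0 < n)%N;
  fc_diag : forall i, C i i = 2;
  fc_offdiag : forall i j, i != j -> C i j <= 0;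
  fc_d_pos : forall i, (0 < d i)%N;
  fc_sym : forall i j, (d i)%:Z * C i j = (d j)%:Z * C j i;
  fc_coprime : \big[gcdn/0%N]_i d i = 1%N;
  fc_indec : forall A : {set 'I_n}, A != set0 -> A != setT ->
               exists i, exists j, [/\ i \in A, j \notin A & C i j != 0];
  fc_posdef : forall x : 'I_n -> rat, (exists i, x i != 0) ->
               0 < \sum_i \sum_j x i * ((d i)%:R * (C i j)%:~R) * x j }.

Definition lacing (n : nat) (d : 'I_n -> nat) : nat := \max_i d i.

(* Weyl group: simple reflections acting on the root lattice Z^I,      *)
(* s_i(v) = v - <v, alpha_i^vee> alpha_i.                             *)
Definition refl (n : nat) (C : 'M[int]_n) (i : 'I_n) (v : 'I_n -> int)
  : 'I_n -> int :=
  fun j => if j == i then v i - \sum_k C i k * v k else v j.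

Definition word_act (n : nat) (C : 'M[int]_n) (s : seq 'I_n)
  (v : 'I_n -> int) : 'I_n -> int :=
  foldr (fun i u => refl C i u) v s.

Definition same_weyl (n : nat) (C : 'M[int]_n) (s t : seq 'I_n) : Prop :=
  forall v j, word_act C s v j = word_act C t v j.

Definition reduced_word (n : nat) (C : 'M[int]_n) (s : seq 'I_n) : Prop :=
  forall t, same_weyl C s t -> (size s <= size t)%N.

(* The ring Y = Z[Y_{i,a}^{+-1}] realized as the ring of (Laurent      *)
(* polynomial) functions on the torus (C^x)^(I x C): a point assigns a *)
(* nonzero value x i a to every variable Y_{i,a}.                      *)
Section Torus.
Variable (R : realType).
Local Notation K := (R[i]).

Definition pt (n : nat) := {x : 'I_n -> K -> K | forall i a, x i a != 0}.

Definition Fn (n : nat) := pt n -> K.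

Definition Yv (n : nat) (i : 'I_n) (a : K) : Fn n := fun x => sval x i a.

Definition A_raw (n : nat) (C : 'M[int]_n) (d : 'I_n -> nat) (q : K)
  (x : 'I_n -> K -> K) (i : 'I_n) (a : K) : K :=
  let qi := q ^+ d i in
  x i (a / qi) * x i (a * qi) *
  (\prod_(j | C j i == -1) x j a *
   \prod_(j | C j i == -2) (x j (a / q) * x j (a * q)) *
   \prod_(j | C j i == -3) (x j (a / q ^+ 2) * x j a * x j (a * q ^+ 2)))^-1.

Definition A (n : nat) (C : 'M[int]_n) (d : 'I_n -> nat) (q : K)
  (i : 'I_n) (a : K) : Fn n := fun x => A_raw C d q (sval x) i a.

Lemma A_raw_neq0 n (C : 'M[int]_n) d q (x : pt n) i a :
  A_raw C d q (sval x) i a != 0.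
Proof.
case: x => x hx /=; rewrite /A_raw.
rewrite !mulf_neq0 ?invr_eq0 ?hx //.
rewrite !mulf_neq0 //; apply/prodf_neq0 => j _; rewrite ?mulf_neq0 ?hx //.
Qed.

(* the point map dual to the Chari operator T_i *)
Definition tau_raw (n : nat) (C : 'M[int]_n) (d : 'I_n -> nat) (q : K)
  (i : 'I_n) (x : 'I_n -> K -> K) : 'I_n -> K -> K :=
  fun j b => if j == i then x i b * (A_raw C d q x i (b * q ^+ d i))^-1
             else x j b.

Lemma tau_raw_neq0 n (C : 'M[int]_n) d q i (x : pt n) j b :
  tau_raw C d q i (sval x) j b != 0.
Proof.
rewrite /tau_raw; case: (j == i); last by case: x.
by rewrite mulf_neq0 ?invr_eq0 ?A_raw_neq0 //; case: x.
Qed.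

Definition tau (n : nat) (C : 'M[int]_n) (d : 'I_n -> nat) (q : K)
  (i : 'I_n) (x : pt n) : pt n :=
  exist _ (tau_raw C d q i (sval x)) (tau_raw_neq0 C d q i x).

(* Chari operator T_i : the ring endomorphism with
   T_i(Y_{i,a}) = Y_{i,a} A_{i,a q_i}^{-1}, T_i(Y_{j,a}) = Y_{j,a} (j <> i) *)
Definition T (n : nat) (C : 'M[int]_n) (d : 'I_n -> nat) (q : K)
  (i : 'I_n) (f : Fn n) : Fn n := fun x => f (tau C d q i x).

Definition Tword (n : nat) (C : 'M[int]_n) (d : 'I_n -> nat) (q : K)
  (s : seq 'I_n) (f : Fn n) : Fn n := foldr (fun i g => T C d q i g) f s.

Definition Wv (n : nat) (d : 'I_n -> nat) (q : K) (i : 'I_n) (a : K) : Fn n :=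
  fun x =>
  if d i == lacing d then Yv i a x
  else if d i == (lacing d).-1 then Yv i (a / q) x * Yv i (a * q) x
  else (* d i = d - 2 *) Yv i (a / q ^+ 2) x * Yv i a x * Yv i (a * q ^+ 2) x.

Inductive in_subring (n : nat) (G : Fn n -> Prop) : Fn n -> Prop :=
| sub_gen f : G f -> in_subring G f
| sub_one : in_subring G (fun _ => 1)
| sub_add f g : in_subring G f -> in_subring G g ->
                in_subring G (fun x => f x + g x)
| sub_opp f : in_subring G f -> in_subring G (fun x => - f x)
| sub_mul f g : in_subring G f -> in_subring G g ->
                in_subring G (fun x => f x * g x).

Definition W_gens (n : nat) (d : 'I_n -> nat) (q : K) (f : Fn n) : Prop :=
  exists i, exists2 a, a != 0 &
    (f = Wv d q i a \/ f = (fun x => (Wv d q i a x)^-1)).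

Definition ZW (n : nat) (d : 'I_n -> nat) (q : K) : Fn n -> Prop :=
  in_subring (W_gens d q).

End Torus.

(* Main.v *)
Require Import Defs.
From HB Require Import structures.
From mathcomp Require Import all_boot all_order all_algebra.
From mathcomp Require Import reals complex.
From mathcomp Require Import ring lra zify.
From Stdlib Require Import FunctionalExtensionality.
Set Implicit Arguments. Unset Strict Implicit. Unset Printing Implicit Defensive.
Import Order.TTheory GRing.Theory Num.Theory.
Local Open Scope ring_scope.
Section Classif.
Variables (n : nat) (C : 'M[int]_n) (d : 'I_n -> nat).
Hypothesis H : finite_cartan C d.

Definition Bz (i j : 'I_n) : int := (d i)%:Z * C i j.

Lemma posdefz (x : 'I_n -> int) : (exists i, x i != 0) ->
  0 < \sum_i \sum_j x i * Bz i j * x j.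
Proof.
move=> [i hi].
have := fc_posdef H (x := fun i => (x i)%:~R) _.
have -> : \sum_i0 \sum_j (x i0)%:~R * ((d i0)%:R * (C i0 j)%:~R) * (x j)%:~R
   = (\sum_i \sum_j x i * Bz i j * x j)%:~R :> rat.
  rewrite rmorph_sum; apply: eq_bigr => a _.
  rewrite rmorph_sum; apply: eq_bigr => b _.
  by rewrite /Bz !rmorphM /= -pmulrn.
rewrite ltr0z; apply; exists i; by rewrite intr_eq0.
Qed.

Lemma QfS (L : seq 'I_n) (c : 'I_n -> int) : uniq L ->
  \sum_i \sum_j (if i \in L then c i else 0) * Bz i j * (if j \in L then c j else 0)
  = \sum_(i <- L) \sum_(j <- L) c i * Bz i j * c j.
Proof.
move=> uL; rewrite [RHS](big_uniq _ uL) /= [RHS]big_mkcond /=; apply: eq_bigr => i _.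
case: (i \in L); last by rewrite big1 // => j _; rewrite !mul0r.
rewrite [RHS](big_uniq _ uL) /= [RHS]big_mkcond /=; apply: eq_bigr => j _.
by case: (j \in L); rewrite ?mulr0.
Qed.

Lemma posdef_seq (L : seq 'I_n) (c : 'I_n -> int) : uniq L ->
  (exists2 i, i \in L & c i != 0) ->
  0 < \sum_(i <- L) \sum_(j <- L) c i * Bz i j * c j.
Proof.
move=> uL [i iL ci]; rewrite -QfS //; apply: posdefz; exists i; by rewrite iL.
Qed.

Lemma Qs_cons (F : 'I_n -> 'I_n -> int) w L :
  \sum_(i <- w :: L) \sum_(j <- w :: L) F i j =
  F w w + \sum_(j <- L) (F w j + F j w) + \sum_(i <- L) \sum_(j <- L) F i j.
Proof.
rewrite big_cons big_cons.
under [X in _ + X = _]eq_bigr do rewrite big_cons.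
rewrite big_split /= big_split /=; ring.
Qed.

Lemma sum_le0_seq (r : seq 'I_n) (F : 'I_n -> int) :
  (forall i, i \in r -> F i <= 0) -> \sum_(i <- r) F i <= 0.
Proof.
move=> h; rewrite big_seq; apply: (big_ind (fun x => x <= 0)) => //.
by move=> x y; lia.
Qed.

Lemma Bz_sym i j : Bz i j = Bz j i.
Proof. rewrite /Bz; exact: (fc_sym H i j). Qed.

Lemma Bz_diag i : Bz i i = 2 * (d i)%:Z.
Proof. by rewrite /Bz (fc_diag H) mulrC. Qed.

Lemma Bz_off i j : i != j -> Bz i j <= 0.
Proof. move=> /(fc_offdiag H) h; rewrite /Bz; have := fc_d_pos H i; nia. Qed.

Lemma C_nz_sym i j : C i j != 0 -> C j i != 0.
Proof.
move=> h; apply/negP => /eqP h2; move: (fc_sym H i j); rewrite h2 mulr0.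
have := fc_d_pos H i; move: h; nia.
Qed.

Lemma C_neg i j : i != j -> C i j != 0 -> C i j <= -1.
Proof. move=> /(fc_offdiag H); lia. Qed.

Lemma C_ne_diag i j : C i j != 0 -> d i != d j -> i != j.
Proof. by move=> _; apply: contra => /eqP->. Qed.

Definition e := [rel u v | (C u v != 0) && (d u == d v)].

Lemma path_val p0 P : path e p0 P -> forall k, k \in p0 :: P -> d k = d p0.
Proof.
elim: P p0 => [|p1 P IH] p0 /=; first by move=> _ k; rewrite inE => /eqP->.
case/andP => /andP[_ /eqP h01] hP k; rewrite inE => /orP[/eqP->//|].
by move=> /(IH _ hP) ->.
Qed.

Lemma path_sum P p0 : path e p0 P -> uniq (p0 :: P) ->
  \sum_(i <- p0 :: P) \sum_(j <- p0 :: P) Bz i j <= 2 * (d p0)%:Z.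
Proof.
elim: P p0 => [|p1 P IH] p0.
  by move=> _ _; rewrite big_cons !big_nil big_cons big_nil Bz_diag; lia.
move=> /= /andP[/andP[h01 /eqP e01] hP] /andP[n0 u1].
rewrite Qs_cons; have := IH p1 hP u1; rewrite -e01 => hI.
rewrite big_cons.
have hn : p0 != p1 by apply: contraNneq n0 => ->; rewrite inE eqxx.
have hs : \sum_(j <- P) (Bz p0 j + Bz j p0) <= 0.
  apply: sum_le0_seq => j jP; rewrite [Bz j p0]Bz_sym.
  have : p0 != j by apply: contraNneq n0 => ->; rewrite inE jP orbT.
  move=> /Bz_off; lia.
rewrite [Bz p1 p0]Bz_sym Bz_diag.
have hB : Bz p0 p1 <= - (d p0)%:Z by have := C_neg hn h01; rewrite /Bz; have := fc_d_pos H p0; nia.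
apply: (@le_trans _ _ (2 * (d p0)%:Z + (Bz p0 p1 + Bz p0 p1 + 0) + 2 * (d p0)%:Z)).
  by apply: lerD => //; rewrite lerD2l; apply: lerD => //.
lia.
Qed.

Lemma sum_le0_cond (r : seq 'I_n) (P : pred 'I_n) (F : 'I_n -> int) :
  (forall i, i \in r -> P i -> F i <= 0) -> \sum_(i <- r | P i) F i <= 0.
Proof.
move=> h; rewrite big_seq_cond; apply: (big_ind (fun x => x <= 0)) => //.
  by move=> x y; lia.
by move=> i /andP[]; apply: h.
Qed.

Lemma sum_le_one r w k : uniq r -> w \notin r -> k \in r ->
  \sum_(j <- r) Bz w j <= Bz w k.
Proof.
move=> ur wr kr; rewrite (bigD1_seq k) //= -[X in _ <= X]addr0 lerD2l.
apply: sum_le0_cond => j jr _; apply: Bz_off.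
by apply: contraNneq wr => ->.
Qed.

Lemma sum_le_two r w k1 k2 : uniq r -> w \notin r -> k1 \in r -> k2 \in r ->
  k1 != k2 -> \sum_(j <- r) Bz w j <= Bz w k1 + Bz w k2.
Proof.
move=> ur wr k1r k2r k12; rewrite (bigD1_seq k1) //= lerD2l.
rewrite -big_filter; apply: sum_le_one; first exact: filter_uniq.
  by rewrite mem_filter negb_and wr orbT.
by rewrite mem_filter eq_sym k12.
Qed.

Lemma cross_sum (c : 'I_n -> int) w r : (forall j, j \in r -> c j = 2) ->
  \sum_(j <- r) (c w * Bz w j * c j + c j * Bz j w * c w) =
  4 * c w * \sum_(j <- r) Bz w j.
Proof.
move=> h; rewrite mulr_sumr big_seq [RHS]big_seq; apply: eq_bigr => j jr.
rewrite (h j jr) [Bz j w]Bz_sym; ring.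
Qed.

Lemma inner_sum (c : 'I_n -> int) r : (forall j, j \in r -> c j = 2) ->
  \sum_(i <- r) \sum_(j <- r) c i * Bz i j * c j =
  4 * \sum_(i <- r) \sum_(j <- r) Bz i j.
Proof.
move=> h; rewrite mulr_sumr big_seq [RHS]big_seq; apply: eq_bigr => i ir.
rewrite mulr_sumr big_seq [RHS]big_seq; apply: eq_bigr => j jr.
rewrite (h i ir) (h j jr); ring.
Qed.

Lemma cyc_bound (dd DD x y r : int) : 1 <= dd -> 1 <= DD -> 1 <= x -> 1 <= y ->
  1 <= r -> dd * x = DD * r -> 4 * DD <= dd * (x + y) * (x + y).
Proof.
move=> h1 h2 h3 h4 h5 h6.
have h7 : 4 * x <= (x + y) * (x + y) by nia.
have h8 : 4 * DD <= 4 * (dd * x) by rewrite h6; nia.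
nia.
Qed.

Lemma edge_bound (dd DD a r : int) : 1 <= dd -> 1 <= DD -> 1 <= a -> 1 <= r ->
  dd * a = DD * r -> dd != DD -> 2 * DD <= dd * a * a.
Proof.
move=> h1 h2 h3 h4 h5 h6.
have h7 : 2 <= r * a.
  case: (ltP 1 a) => ha; first nia.
  have ea : a = 1 by lia.
  subst a; rewrite mulr1 in h5 *.
  case: (ltP 1 r) => hr; first lia.
  have er : r = 1 by lia.
  by subst r; move: h6; rewrite h5 mulr1 eqxx.
have -> : dd * a * a = DD * (r * a) by rewrite h5; ring.
nia.
Qed.

Lemma cyc_final (dd DD a b r S Q : int) : (0 < dd) -> (0 < DD) ->
  a <= -1 -> b <= -1 -> r <= -1 -> dd * a = DD * r ->
  0 < (- a - b) * (2 * dd) * (- a - b) + 4 * (- a - b) * S + 4 * Q ->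
  S <= dd * a + dd * b -> Q <= 2 * DD -> False.
Proof.
move=> h1 h2 h3 h4 h5 h6 h7 h8 h9.
have hb := @cyc_bound dd DD (- a) (- b) (- r) ltac:(lia) ltac:(lia) ltac:(lia) ltac:(lia) ltac:(lia) ltac:(lia).
have hg : 0 < 4 * (- a - b) by lia.
have h10 : 4 * (- a - b) * S <= 4 * (- a - b) * (dd * a + dd * b) by rewrite ler_pM2l.
have e : - a + - b = - a - b by [].
rewrite e in hb.
nia.
Qed.

Lemma gen_final (du dv DD a b r r' S1 S2 Q X : int) : 0 < du -> 0 < dv -> 0 < DD ->
  a <= -1 -> b <= -1 -> r <= -1 -> r' <= -1 -> du * a = DD * r -> dv * b = DD * r' ->
  du != DD -> dv != DD -> X <= 0 ->
  0 < (- a) * (2 * du) * (- a) + (X + 4 * (- a) * S1) +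
      ((- b) * (2 * dv) * (- b) + 4 * (- b) * S2 + 4 * Q) ->
  S1 <= du * a -> S2 <= dv * b -> Q <= 2 * DD -> False.
Proof.
move=> h1 h2 h3 h4 h5 h6 h7 h8 h9 h10 h11 hX hp hS1 hS2 hQ.
have e1 := @edge_bound du DD (- a) (- r) ltac:(lia) ltac:(lia) ltac:(lia) ltac:(lia) ltac:(lia) h10.
have e2 := @edge_bound dv DD (- b) (- r') ltac:(lia) ltac:(lia) ltac:(lia) ltac:(lia) ltac:(lia) h11.
have g1 : 4 * (- a) * S1 <= 4 * (- a) * (du * a) by rewrite ler_pM2l //; lia.
have g2 : 4 * (- b) * S2 <= 4 * (- b) * (dv * b) by rewrite ler_pM2l //; lia.
nia.
Qed.

Lemma L1 u0 u1 v0 v1 : C u0 u1 != 0 -> d u0 != d u1 -> C v0 v1 != 0 ->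
  d v0 != d v1 -> connect e u1 v1 -> u0 = v0 /\ u1 = v1.
Proof.
move=> cu du cv dv /connectP [p hp lp].
move: lp; case: (shortenP hp) => P hP uP _ lp.
have hval := path_val hP.
have v1P : v1 \in u1 :: P by rewrite lp mem_last.
have dv1 : d v1 = d u1 by apply: hval.
have u0P : u0 \notin u1 :: P by apply: contra du => /hval ->.
have v0P : v0 \notin u1 :: P by apply: contra dv => /hval ->; rewrite dv1.
have hQ := path_sum hP uP.
have nu : u0 != u1 by apply: contraNneq du => ->.
have nv : v0 != v1 by apply: contraNneq dv => ->.
have hcu := C_neg nu cu; have hcv := C_neg nv cv.
have hcu' : C u1 u0 <= -1 by apply: C_neg (C_nz_sym cu); rewrite eq_sym.
have hsu : (d u0)%:Z * C u0 u1 = (d u1)%:Z * C u1 u0 := fc_sym H u0 u1.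
have d0p : 0 < (d u0)%:Z by rewrite ltz_nat; exact: fc_d_pos H u0.
have D0p : 0 < (d u1)%:Z by rewrite ltz_nat; exact: fc_d_pos H u1.
case: (eqVneq u0 v0) => [e0|n0].
  subst v0; case: (eqVneq u1 v1) => [<-|n1]; first by [].
  exfalso.
  set g := - C u0 u1 - C u0 v1.
  have hg : 0 < g by rewrite /g; clear -hcu hcv; lia.
  pose c := fun i => if i == u0 then g else 2.
  have hpos := @posdef_seq (u0 :: u1 :: P) c.
  have c2 : forall j, j \in u1 :: P -> c j = 2.
    by move=> j jP; rewrite /c ifF //; apply: contraNF u0P => /eqP <-.
  rewrite Qs_cons cross_sum // inner_sum // {1 2}/c eqxx in hpos.
  have {hpos} hpos := hpos ltac:(by rewrite /= u0P) ltac:(by exists u0; rewrite ?inE ?eqxx //= lt0r_neq0).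
  rewrite /c eqxx Bz_diag in hpos.
  have hs := sum_le_two uP u0P (mem_head u1 P) v1P n1.
  rewrite /Bz in hs.
  exact: cyc_final d0p D0p hcu hcv hcu' hsu hpos hs hQ.
exfalso.
set a := - C u0 u1; set b := - C v0 v1.
have ha : 0 < a by rewrite /a; clear -hcu; lia.
have hb : 0 < b by rewrite /b; clear -hcv; lia.
pose c := fun i => if i == u0 then a else if i == v0 then b else 2.
have hpos := @posdef_seq (u0 :: v0 :: u1 :: P) c.
have c2 : forall j, j \in u1 :: P -> c j = 2.
  move=> j jP; rewrite /c ifF; last by apply: contraNF u0P => /eqP <-.
  by rewrite ifF //; apply: contraNF v0P => /eqP <-.
rewrite Qs_cons big_cons Qs_cons !cross_sum // inner_sum // in hpos.
rewrite /c !eqxx [v0 == u0]eq_sym (negbTE n0) in hpos.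
have {hpos} hpos := hpos ltac:(by rewrite cons_uniq in_cons negb_or n0 u0P cons_uniq v0P uP)
   ltac:(by exists u0; rewrite ?inE ?eqxx //= lt0r_neq0).
have hs1 := sum_le_one uP u0P (mem_head u1 P).
have hs2 := sum_le_one uP v0P v1P.
rewrite /Bz in hs1 hs2.
rewrite !Bz_diag in hpos.
have hx : a * Bz u0 v0 * b + b * Bz v0 u0 * a <= 0.
  rewrite [Bz v0 u0]Bz_sym; have := Bz_off n0; clear -ha hb; nia.
have hcv' : C v1 v0 <= -1 by apply: C_neg (C_nz_sym cv); rewrite eq_sym.
have hsv : (d v0)%:Z * C v0 v1 = (d u1)%:Z * C v1 v0 by rewrite -dv1; exact: fc_sym H v0 v1.
have dvp : 0 < (d v0)%:Z by rewrite ltz_nat; exact: fc_d_pos H v0.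
have ne1 : (d u0)%:Z != (d u1)%:Z by [].
have ne2 : (d v0)%:Z != (d u1)%:Z by rewrite -dv1.
exact: gen_final d0p dvp D0p hcu hcv hcu' hcv' hsu hsv ne1 ne2 hx hpos hs1 hs2 hQ.
Qed.

Lemma pairb i j : i != j -> C i j * C j i <= 3.
Proof.
move=> nij; rewrite leNgt; apply/negP => h4.
pose c := fun k => if k == i then 2 * (d j)%:Z else - (d i)%:Z * C i j.
have hpos := @posdef_seq [:: i; j] c.
rewrite !big_cons !big_nil /c eqxx eq_sym (negbTE nij) in hpos.
have {hpos} := hpos ltac:(by rewrite /= inE nij) ltac:(by exists i; rewrite ?inE ?eqxx //; have := fc_d_pos H j; lia).
rewrite !Bz_diag [Bz j i]Bz_sym /Bz.
have hs : (d i)%:Z * C i j = (d j)%:Z * C j i := fc_sym H i j.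
have di := fc_d_pos H i; have dj := fc_d_pos H j.
have hX2 : (d j)%:Z * (((d i)%:Z * C i j) * ((d i)%:Z * C i j)) = ((d i)%:Z * (d j)%:Z * (d j)%:Z) * (C i j * C j i).
  by rewrite {2}hs; ring.
have hp : 0 < (d i)%:Z * (d j)%:Z * (d j)%:Z by rewrite !mulr_gt0 //; lia.
have hY : ((d i)%:Z * (d j)%:Z * (d j)%:Z) * 4 <= ((d i)%:Z * (d j)%:Z * (d j)%:Z) * (C i j * C j i).
  by rewrite ler_pM2l //; lia.
move: hX2 hY; lia.
Qed.

Lemma connect_val a b : connect e a b -> d b = d a.
Proof.
move=> /connectP [p hp ->]; apply: (path_val hp); exact: mem_last.
Qed.

Definition D := lacing d.

Lemma two_vals x y : C x y != 0 -> (d x < d y)%N ->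
  (forall k, d k = d x \/ d k = d y) ->
  forall k, d k = D \/ (d k = 1 /\ (D = 2 \/ D = 3))%N.
Proof.
move=> cxy lxy hk.
have nxy : x != y by apply: contraTneq lxy => ->; rewrite ltnn.
have h1 := C_neg nxy cxy.
have h2 : C y x <= -1 by apply: C_neg (C_nz_sym cxy); rewrite eq_sym.
have hs : (d x)%:Z * C x y = (d y)%:Z * C y x := fc_sym H x y.
have pb := pairb nxy.
have dx := fc_d_pos H x.
have hyx : C y x = -1.
  have : - C y x < - C x y by nia.
  nia.
have hy : (d y = d x * 2 \/ d y = d x * 3)%N.
  move: hs; rewrite hyx => hs.
  have : C x y = -2 \/ C x y = -3 by nia.
  case=> hc; move: hs; rewrite hc; lia.
have dx1 : d x = 1%N.
  apply/eqP; rewrite -dvdn1 -(fc_coprime H); apply/dvdn_biggcdP => k _.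
  by case: (hk k) => ->; rewrite ?dvdnn //; case: hy => ->; apply: dvdn_mulr.
have hD : D = d y.
  apply/eqP; rewrite eqn_leq leq_bigmax andbT; apply/bigmax_leqP => k _.
  by case: (hk k) => ->; rewrite ?leqnn // ltnW.
move=> k; case: (hk k) => ->; last by left.
right; split=> //; rewrite hD; move: hy; rewrite dx1; lia.
Qed.

Lemma classif k0 : d k0 = D \/ (d k0 = 1 /\ (D = 2 \/ D = 3))%N.
Proof.
case: (boolP [forall i, d i == D]) => [/forallP hall | ].
  by left; apply/eqP.
rewrite negb_forall => /existsP [u hu].
pose m := [arg max_(i > u) d i].
have hm : D = d m by rewrite /D /lacing (bigop.bigmax_eq_arg u).
pose A := [set k | d k == d u].
have A0 : A != set0 by apply/set0Pn; exists u; rewrite /A inE.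
have AT : A != setT.
  apply/eqP => hA; have : m \in A by rewrite hA inE.
  by rewrite /A inE -hm eq_sym (negbTE hu).
have [i0 [j0 [i0A j0A cij]]] := fc_indec H A0 AT.
rewrite /A !inE in i0A j0A; move/eqP: i0A => i0A.
have dij : d i0 != d j0 by rewrite i0A eq_sym.
have cover : forall k, connect e i0 k || connect e j0 k.
  move=> k; apply/negPn/negP => hk.
  pose U := [set k | connect e i0 k || connect e j0 k].
  have U0 : U != set0 by apply/set0Pn; exists i0; rewrite /U inE connect0.
  have UT : U != setT.
    apply/eqP => hU; have : k \in U by rewrite hU inE.
    by rewrite /U inE (negbTE hk).
  have [x [y [xU yU cxy]]] := fc_indec H U0 UT.
  rewrite /U !inE in xU yU.
  case: (eqVneq (d x) (d y)) => dxy.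
    have exy : e x y by rewrite /= cxy dxy eqxx.
    move: yU; rewrite negb_or => /andP[yi yj].
    case/orP: xU => hx.
      by move: yi; rewrite (connect_trans hx (@connect1 _ e x y exy)).
    by move: yj; rewrite (connect_trans hx (@connect1 _ e x y exy)).
  have cyx := C_nz_sym cxy.
  have dyx : d y != d x by rewrite eq_sym.
  move: yU; rewrite negb_or => /andP[yi yj].
  case/orP: xU => hx.
    have [ej _] := L1 (C_nz_sym cij) (introN eqP (fun h => (negP dij) (introT eqP (esym h)))) cyx dyx hx.
    by move: yj; rewrite -ej connect0.
  have [ei _] := L1 cij dij cyx dyx hx.
  by move: yi; rewrite -ei connect0.
have hk : forall k, d k = d i0 \/ d k = d j0.
  move=> k; case/orP: (cover k) => /connect_val ->; by [left | right].
case: (ltngtP (d i0) (d j0)) => hl.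
- exact: (two_vals cij hl hk k0).
- apply: (two_vals (C_nz_sym cij) hl _ k0) => k'; case: (hk k'); by [right | left].
- by move: dij; rewrite hl eqxx.
Qed.
Lemma nb_ne i j r : C j i = - r%:Z -> (0 < r)%N -> j != i.
Proof. move=> h r0; apply/eqP => e; subst j; move: h; rewrite (fc_diag H); lia. Qed.

Lemma dle j : (d j <= D)%N.
Proof. exact: leq_bigmax. Qed.

Lemma nbL1 i j : d i = D -> C j i = -1 -> d j = D.
Proof.
move=> hi hj; have nji := @nb_ne i j 1 hj isT.
have hs : (d j)%:Z * C j i = (d i)%:Z * C i j := fc_sym H j i.
have hc : C i j <= -1 by apply: C_neg; [rewrite eq_sym | apply: C_nz_sym; rewrite hj].
have := dle j; have := fc_d_pos H i; move: hs; rewrite hi hj; nia.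
Qed.

Lemma nbL2 i j : d i = D -> C j i = -2 -> d j = 1%N /\ D = 2%N.
Proof.
move=> hi hj; have nji := @nb_ne i j 2 hj isT.
have hs : (d j)%:Z * C j i = (d i)%:Z * C i j := fc_sym H j i.
have hc : C i j <= -1 by apply: C_neg; [rewrite eq_sym | apply: C_nz_sym; rewrite hj].
have pb := pairb (nji : j != i); rewrite hj in pb.
have dj := fc_d_pos H j.
have hc1 : C i j = -1 by lia.
move: hs; rewrite hi hj hc1 => hs.
case: (classif j) => hdj; first lia.
case: hdj => h1 h2; split => //; lia.
Qed.

Lemma nbL3 i j : d i = D -> C j i = -3 -> d j = 1%N /\ D = 3%N.
Proof.
move=> hi hj; have nji := @nb_ne i j 3 hj isT.
have hs : (d j)%:Z * C j i = (d i)%:Z * C i j := fc_sym H j i.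
have hc : C i j <= -1 by apply: C_neg; [rewrite eq_sym | apply: C_nz_sym; rewrite hj].
have pb := pairb (nji : j != i); rewrite hj in pb.
have dj := fc_d_pos H j.
have hc1 : C i j = -1 by lia.
move: hs; rewrite hi hj hc1 => hs.
case: (classif j) => hdj; first lia.
case: hdj => h1 h2; split => //; lia.
Qed.

Lemma nbS i j r : d i != D -> C j i = - r%:Z -> (2 <= r)%N -> False.
Proof.
move=> hi hj r2; have nji := @nb_ne i j r hj (ltnW r2).
have hs : (d j)%:Z * C j i = (d i)%:Z * C i j := fc_sym H j i.
have pb := pairb (nji : j != i); rewrite hj in pb.
have dj := fc_d_pos H j.
case: (classif i) => hdi; first by rewrite hdi eqxx in hi.
case: hdi => hdi _; move: hs; rewrite hdi hj => hs.
nia.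
Qed.

End Classif.

Section Main.
Variables (R : realType) (n : nat) (C : 'M[int]_n) (d : 'I_n -> nat) (q : R[i]).
Hypothesis H : finite_cartan C d.
Hypothesis hq : q != 0.

Inductive Mono : Fn R n -> Prop :=
| mono_W j a : a != 0 -> Mono (Wv d q j a)
| mono_Wi j a : a != 0 -> Mono (fun x => (Wv d q j a x)^-1)
| mono_one : Mono (fun _ => 1)
| mono_mul f g : Mono f -> Mono g -> Mono (fun x => f x * g x).

Lemma mono_ZW f : Mono f -> ZW d q f.
Proof.
elim=> [j a a0|j a a0||f' g _ hf _ hg].
- by apply: sub_gen; exists j; exists a => //; left.
- by apply: sub_gen; exists j; exists a => //; right.
- exact: sub_one.
- exact: sub_mul.
Qed.

Lemma mono_inv f : Mono f -> Mono (fun x => (f x)^-1).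
Proof.
elim=> [j a a0|j a a0||f' g _ hf _ hg].
- exact: mono_Wi.
- have -> : (fun x => ((Wv d q j a x)^-1)^-1) = Wv d q j a.
    by apply: functional_extensionality => x; rewrite invrK.
  exact: mono_W.
- have -> : (fun _ : pt R n => (1 : R[i])^-1) = (fun _ => 1).
    by apply: functional_extensionality => x; rewrite invr1.
  exact: mono_one.
- have -> : (fun x => (f' x * g x)^-1) = (fun x => (f' x)^-1 * (g x)^-1).
    by apply: functional_extensionality => x; rewrite invfM.
  exact: mono_mul.
Qed.

Lemma mono_prod (P : pred 'I_n) (F : 'I_n -> Fn R n) :
  (forall j, P j -> Mono (F j)) -> Mono (fun x => \prod_(j | P j) F j x).
Proof.
move=> hF.
suff : forall s, Mono (fun x => \prod_(j <- s | P j) F j x) by apply.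
elim=> [|j s IH].
  have -> : (fun x => \prod_(j <- [::] | P j) F j x) = (fun _ => 1).
    by apply: functional_extensionality => x; rewrite big_nil.
  exact: mono_one.
have -> : (fun x => \prod_(j0 <- j :: s | P j0) F j0 x) =
   (fun x => (if P j then F j x else 1) * \prod_(j0 <- s | P j0) F j0 x).
  apply: functional_extensionality => x; rewrite big_cons.
  by case: (P j); rewrite ?mul1r.
apply: mono_mul => //; case: (boolP (P j)) => hj; first exact: hF.
exact: mono_one.
Qed.

Lemma T_other i j a : j != i -> T C d q i (Wv d q j a) = Wv d q j a.
Proof.
move=> nji; apply: functional_extensionality => x.
by rewrite /T /Wv /Yv /tau /= /tau_raw (negbTE nji).
Qed.

Lemma W_long j c x : d j = lacing d -> Wv d q j c x = Yv j c x.
Proof. by move=> h; rewrite /Wv h eqxx. Qed.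

Lemma W_mid j c x : d j != lacing d -> d j = (lacing d).-1 ->
  Wv d q j c x = Yv j (c / q) x * Yv j (c * q) x.
Proof. by move=> h1 h2; rewrite /Wv (negbTE h1) h2 eqxx. Qed.

Lemma W_short j c x : d j != lacing d -> d j != (lacing d).-1 ->
  Wv d q j c x = Yv j (c / q ^+ 2) x * Yv j c x * Yv j (c * q ^+ 2) x.
Proof. by move=> h1 h2; rewrite /Wv (negbTE h1) (negbTE h2). Qed.

Lemma qX_neq0 k : q ^+ k != 0.
Proof. exact: expf_neq0. Qed.

Lemma fl1 (ya yb N : R[i]) : ya != 0 -> yb != 0 -> N != 0 ->
  ya / (ya * yb / N) = yb^-1 * N.
Proof. by move=> h1 h2 h3; field; rewrite h1 h2 h3. Qed.

Lemma fl2 (u v w Pa Pb : R[i]) : u != 0 -> v != 0 -> w != 0 -> Pa != 0 -> Pb != 0 ->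
  u / (u * v / (Pa * 1 * 1)) * (v / (v * w / (Pb * 1 * 1))) = (v * w)^-1 * (Pa * Pb).
Proof. by move=> h1 h2 h3 h4 h5; field; rewrite h1 h2 h3 h4 h5. Qed.

Lemma fl3 (u v w z N1 N2 N3 : R[i]) : u != 0 -> v != 0 -> w != 0 -> z != 0 ->
  N1 != 0 -> N2 != 0 -> N3 != 0 ->
  u / (u * v / (N1 * 1 * 1)) * (v / (v * w / (N2 * 1 * 1))) * (w / (w * z / (N3 * 1 * 1)))
  = (v * w * z)^-1 * (N1 * N2 * N3).
Proof. by move=> h1 h2 h3 h4 h5 h6 h7; field; rewrite h1 h2 h3 h4 h5 h6 h7. Qed.

Lemma T_same_long i a : a != 0 -> d i = lacing d -> Mono (T C d q i (Wv d q i a)).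
Proof.
move=> a0 hdi.
set b := a * q ^+ d i.
have b0 : b != 0 by rewrite mulf_neq0 ?qX_neq0.
have -> : T C d q i (Wv d q i a) = fun x =>
  (Wv d q i (b * q ^+ d i) x)^-1 *
  (\prod_(j | C j i == -1) Wv d q j b x *
   \prod_(j | C j i == -2) Wv d q j b x *
   \prod_(j | C j i == -3) Wv d q j b x).
  apply: functional_extensionality => x.
  rewrite (W_long _ _ hdi).
  have E1 : \prod_(j | C j i == -1) Wv d q j b x = \prod_(j | C j i == -1) Yv j b x.
    apply: eq_bigr => j /eqP hj; apply: W_long; exact: (nbL1 H hdi hj).
  have E2 : \prod_(j | C j i == -2) Wv d q j b x =
            \prod_(j | C j i == -2) (Yv j (b / q) x * Yv j (b * q) x).
    apply: eq_bigr => j /eqP hj; have [h1 h2] := nbL2 H hdi hj.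
    apply: W_mid; rewrite /D in h2; rewrite h1 h2 //.
  have E3 : \prod_(j | C j i == -3) Wv d q j b x =
            \prod_(j | C j i == -3) (Yv j (b / q ^+ 2) x * Yv j b x * Yv j (b * q ^+ 2) x).
    apply: eq_bigr => j /eqP hj; have [h1 h2] := nbL3 H hdi hj.
    apply: W_short; rewrite /D in h2; rewrite h1 h2 //.
  rewrite E1 E2 E3; clear E1 E2 E3.
  case: x => y hy.
  rewrite /T /Wv /Yv /tau /=.
  have -> : (d i == lacing d) = true by apply/eqP.
  rewrite /tau_raw eqxx /A_raw /b mulfK ?qX_neq0 //.
  apply: fl1; rewrite ?hy //.
  by rewrite !mulf_neq0 //; apply/prodf_neq0 => j _; rewrite ?mulf_neq0 ?hy.
apply: mono_mul; first by apply: mono_inv; apply: mono_W; rewrite mulf_neq0 ?qX_neq0.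
by apply: mono_mul; [apply: mono_mul|]; apply: mono_prod => j _; apply: mono_W.
Qed.
Lemma T_same_mid i a : a != 0 -> d i = 1%N -> lacing d = 2%N ->
  Mono (T C d q i (Wv d q i a)).
Proof.
move=> a0 hdi hD.
have h1 : d i != lacing d by rewrite hdi hD.
have h2 : d i = (lacing d).-1 by rewrite hdi hD.
have hiD : d i != D d by [].
have Z2 : forall F : 'I_n -> R[i], \prod_(j | C j i == -2) F j = 1.
  by move=> F; apply: big1 => j /eqP hj; exfalso; exact: (nbS (r := 2) H hiD hj isT).
have Z3 : forall F : 'I_n -> R[i], \prod_(j | C j i == -3) F j = 1.
  by move=> F; apply: big1 => j /eqP hj; exfalso; exact: (nbS (r := 3) H hiD hj isT).
pose G j x := if d j == lacing d then Wv d q j a x * Wv d q j (a * q ^+ 2) x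
              else Wv d q j (a * q) x.
have -> : T C d q i (Wv d q i a) = fun x =>
  (Wv d q i (a * q ^+ 2) x)^-1 * \prod_(j | C j i == -1) G j x.
  apply: functional_extensionality => x.
  have E1 : \prod_(j | C j i == -1) G j x =
            \prod_(j | C j i == -1) (Yv j a x * Yv j (a * q ^+ 2) x).
    apply: eq_bigr => j /eqP hj; rewrite /G.
    case: ifP => [/eqP hj2|/negbT hj2]; first by rewrite !(W_long _ _ hj2).
    have hj1 : d j = (lacing d).-1.
      by case: (classif H j) => [h|[h _]]; [rewrite h eqxx in hj2|rewrite h hD].
    by rewrite (W_mid _ _ hj2 hj1) mulfK // -mulrA -expr2.
  rewrite E1 {E1} /T !(W_mid _ _ h1 h2).
  case: x => y hy.
  rewrite /Yv /tau /= /tau_raw eqxx /A_raw hdi expr1 !Z2 !Z3.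
  rewrite divfK // expr2 [a * (q * q)]mulrA !mulfK // big_split /=.
  by apply: fl2; try exact: hy; apply/prodf_neq0 => j _; exact: hy.
apply: mono_mul; first by apply: mono_inv; apply: mono_W; rewrite mulf_neq0 ?qX_neq0.
apply: mono_prod => j _; rewrite /G /=; case: (d j == lacing d).
  by apply: mono_mul; apply: mono_W; rewrite ?mulf_neq0 ?qX_neq0.
by apply: mono_W; rewrite mulf_neq0.
Qed.

Lemma T_same_short i a : a != 0 -> d i = 1%N -> lacing d = 3%N ->
  Mono (T C d q i (Wv d q i a)).
Proof.
move=> a0 hdi hD.
have h1 : d i != lacing d by rewrite hdi hD.
have h2 : d i != (lacing d).-1 by rewrite hdi hD.
have hiD : d i != D d by [].
have Z2 : forall F : 'I_n -> R[i], \prod_(j | C j i == -2) F j = 1.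
  by move=> F; apply: big1 => j /eqP hj; exfalso; exact: (nbS (r := 2) H hiD hj isT).
have Z3 : forall F : 'I_n -> R[i], \prod_(j | C j i == -3) F j = 1.
  by move=> F; apply: big1 => j /eqP hj; exfalso; exact: (nbS (r := 3) H hiD hj isT).
have e1 : a / q ^+ 2 * q * q = a by field.
have e2 : a / q ^+ 2 * q = a / q by field.
have e3 : a * q ^+ 2 * q * q = a * q ^+ 4 by field.
have e4 : a * q ^+ 2 * q = a * q ^+ 3 by field.
have e5 : a * q ^+ 2 * q ^+ 2 = a * q ^+ 4 by field.
have e6 : a * q ^+ 2 / q ^+ 2 = a by field.
have e7 : a * q / q ^+ 2 = a / q by field.
have e8 : a * q * q ^+ 2 = a * q ^+ 3 by field.
have e9 : a * q * q = a * q ^+ 2 by field.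
pose G j x := if d j == lacing d then Wv d q j (a / q) x * Wv d q j (a * q) x * Wv d q j (a * q ^+ 3) x
              else Wv d q j (a * q) x.
have -> : T C d q i (Wv d q i a) = fun x =>
  (Wv d q i (a * q ^+ 2) x)^-1 * \prod_(j | C j i == -1) G j x.
  apply: functional_extensionality => x.
  have E1 : \prod_(j | C j i == -1) G j x =
            \prod_(j | C j i == -1) (Yv j (a / q) x * Yv j (a * q) x * Yv j (a * q ^+ 3) x).
    apply: eq_bigr => j /eqP hj; rewrite /G.
    case: ifP => [/eqP hj2|/negbT hj2]; first by rewrite !(W_long _ _ hj2).
    have hj1 : d j != (lacing d).-1.
      by case: (classif H j) => [h|[h _]]; [rewrite h eqxx in hj2|rewrite h hD].
    by rewrite (W_short _ _ hj2 hj1) e7 e8.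
  rewrite E1 {E1} /T !(W_short _ _ h1 h2).
  case: x => y hy.
  rewrite /Yv /tau /= /tau_raw eqxx /A_raw hdi expr1 !Z2 !Z3.
  rewrite !mulfK ?qX_neq0 // ?e1 ?e2 ?e3 ?e4 ?e5 ?e6 ?e9 !big_split /=.
  by apply: fl3; try exact: hy; apply/prodf_neq0 => j _; exact: hy.
apply: mono_mul; first by apply: mono_inv; apply: mono_W; rewrite mulf_neq0 ?qX_neq0.
apply: mono_prod => j _; rewrite /G /=; case: (d j == lacing d).
  by apply: mono_mul; [apply: mono_mul|]; apply: mono_W;
    rewrite ?mulf_neq0 ?qX_neq0 ?invr_neq0.
by apply: mono_W; rewrite mulf_neq0.
Qed.

Lemma T_gen i j a : a != 0 -> Mono (T C d q i (Wv d q j a)).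
Proof.
move=> a0; case: (eqVneq j i) => [->|nji]; last by rewrite T_other //; exact: mono_W.
case: (classif H i) => [h|[h [h'|h']]].
- exact: T_same_long.
- exact: T_same_mid.
- exact: T_same_short.
Qed.

Lemma T_pres i f : ZW d q f -> ZW d q (T C d q i f).
Proof.
elim=> [g [j [a a0 [->|->]]]||g1 g2 _ h1 _ h2|g1 _ h1|g1 g2 _ h1 _ h2].
- exact: mono_ZW (T_gen i j a0).
- exact: mono_ZW (mono_inv (T_gen i j a0)).
- exact: sub_one.
- exact: sub_add h1 h2.
- exact: sub_opp h1.
- exact: sub_mul h1 h2.
Qed.

Lemma Tword_pres s f : ZW d q f -> ZW d q (Tword C d q s f).
Proof. by move=> hf; elim: s => [|i s IH] //=; apply: T_pres. Qed.

End Main.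

Unset Implicit Arguments.
Set Strict Implicit.

Theorem mainTheorem1 (R : realType) (n : nat) (C : 'M[int]_n)
  (d : 'I_n -> nat) (q : R[i]) :
  finite_cartan C d ->
  q != 0 -> (forall m : nat, (0 < m)%N -> q ^+ m != 1) ->
  forall s : seq 'I_n, reduced_word C s ->
  forall f : Fn R n, ZW d q f -> ZW d q (Tword C d q s f).
Proof.
move=> H hq _ s _ f hf; exact: Tword_pres H hq s f hf.
Qed.
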